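(* Let $q>0$ and $\ell,\alpha\in\{0,1,2,\ldots\}$, and put $g_\ell(t)=\frac{\log^\ell(t+q)}{t+q}$ for $t\ge0$. Then $$\tilde\gamma_\ell(q)=\sum_{n=0}^{\alpha}(-1)^n\frac{\log^\ell(n+q)}{n+q}-(-1)^{\alpha}\frac{\log^\ell(\alpha+q)}{2(\alpha+q)}+\frac12\int_{\alpha}^\infty\overline E_0(-t)\,g_\ell'(t)\,dt,$$ where $g_\ell'$ is the derivative with respect to $t$. In particular, if $q\in\{1,2,3,\ldots\}$ and $\ell\in\{0,1,2,\ldots\}$, then $$\tilde\gamma_\ell(q)=\frac{\log^\ell q}{2q}+\frac{(-1)^q}{2}\sum_{j=q}^\infty(-1)^{j+1}\left(\frac{\log^\ell(j+1)}{j+1}-\frac{\log^\ell j}{j}\right).$$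
   Context: For $q>0$, $\zeta_E(z,q)=\sum_{n=0}^\infty (-1)^n (n+q)^{-z}$ for $\mathrm{Re}(z)>0$, extended by analytic continuation to an entire function of $z$. The modified Stieltjes constants $\tilde\gamma_k(q)$ are defined by the Taylor expansion $\zeta_E(z,q)=\sum_{k=0}^\infty\frac{(-1)^k\tilde\gamma_k(q)}{k!}(z-1)^k$. $\overline E_0$ is the quasi-periodic Euler function: $\overline E_0(t)=1$ for $0\le t<1$ and $\overline E_0(t+1)=-\overline E_0(t)$ for all real $t$. Convention: $\log^0 x=1$. *)

(* Defs.v *)
From Stdlib Require Import Reals.
From Coquelicot Require Import Coquelicot.
Open Scope R_scope.

(* Restriction of zeta_E(., q) to real z > 0: the (alternating, conditionally
   convergent) series sum_{n>=0} (-1)^n (n+q)^{-z}, as the limit of partial sums. *)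
Definition zetaE_real (q z : R) : R :=
  Series (fun n : nat => (-1) ^ n * Rpower (INR n + q) (- z)).

(* Modified Stieltjes constants: the Taylor expansion
   zeta_E(z,q) = sum_k (-1)^k gamma~_k(q)/k! (z-1)^k  means
   gamma~_k(q) = (-1)^k * (d/dz)^k zeta_E(z,q) at z = 1.
   Derivatives at z = 1 of the entire function coincide with the derivatives of
   its restriction to the real half-line z > 0 (which only depends on values near 1). *)
Definition gamma_tilde (k : nat) (q : R) : R :=
  (-1) ^ k * Derive_n (zetaE_real q) k 1.

(* Quasi-periodic Euler function: E0bar(t) = (-1)^floor(t);
   floor(t) = up t - 1 in Stdlib. *)
Definition E0bar (t : R) : R := powerRZ (-1) (up t - 1)%Z.

Definition g (l : nat) (q t : R) : R := ln (t + q) ^ l / (t + q).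

(* Main.v *)
Require Import Defs.
From Stdlib Require Import Reals Lra Lia ZArith Ranalysis5.
From Coquelicot Require Import Coquelicot.
Open Scope R_scope.


Lemma exp_le : forall x y, x <= y -> exp x <= exp y.
Proof. intros x y H. destruct (Req_dec x y) as [->|]; [lra|]. left; apply exp_increasing; lra. Qed.

Lemma ln_le' : forall x y, 0 < x -> x <= y -> ln x <= ln y.
Proof. intros x y Hx H. destruct (Req_dec x y) as [->|]; [lra|]. left; apply ln_increasing; lra. Qed.

Lemma INR_2m : forall m, INR (2*m) = 2 * INR m.
Proof. intros; rewrite mult_INR; replace (INR 2) with 2 by (simpl; lra); ring. Qed.

Lemma pow_le_exp : forall j s, 0 < s -> exists C, 0 < C /\
  forall L, 0 <= L -> L ^ j <= C * exp (s * L).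
Proof.
  induction j as [|j IH]; intros s Hs.
  - exists 1. split; [lra|]. intros L HL. simpl.
    assert (1 <= exp (s*L)). { rewrite <- exp_0. apply exp_le. nra. } lra.
  - destruct (IH (s/2)) as [C [HC HB]]; [lra|].
    exists (2/s * C). split. { apply Rmult_lt_0_compat; [|lra]. apply Rdiv_lt_0_compat; lra. }
    intros L HL. simpl.
    assert (H1 : L <= 2/s * exp (s/2*L)).
    { pose proof (exp_ineq1_le (s/2*L)).
      assert (exp (s/2*L) >= s/2*L) by lra.
      apply (Rmult_le_reg_l (s/2)); [lra|].
      replace (s/2*(2/s*exp (s/2*L))) with (exp (s/2*L)) by (field; lra). lra. }
    assert (H2 := HB L HL).
    replace (s*L) with (s/2*L + s/2*L) by lra. rewrite exp_plus.
    assert (0 <= L^j) by (apply pow_le; lra).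
    assert (0 < exp (s/2*L)) by apply exp_pos.
    apply Rle_trans with ((2/s * exp (s/2*L)) * (C * exp (s/2*L))).
    + apply Rmult_le_compat; lra.
    + right; ring.
Qed.

Lemma Rpower_decr : forall a c x, a <= 0 -> 0 < c -> c <= x -> Rpower x a <= Rpower c a.
Proof.
  intros a c x Ha Hc Hx. unfold Rpower. apply exp_le.
  assert (ln c <= ln x) by (apply ln_le'; lra). nra.
Qed.

Lemma Rpower_pos' : forall x a, 0 < Rpower x a.
Proof. intros; unfold Rpower; apply exp_pos. Qed.

Lemma ex_series_pos_bounded : forall (a : nat -> R) M,
  (forall n, 0 <= a n) -> (forall n, sum_f_R0 a n <= M) -> ex_series a.
Proof.
  intros a M Hpos HM.
  assert (H : ex_finite_lim_seq (sum_n a)).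
  { apply ex_finite_lim_seq_incr with M.
    - intros n. rewrite !sum_n_Reals. simpl. specialize (Hpos (S n)). lra.
    - intros n. rewrite sum_n_Reals. apply HM. }
  destruct H as [l Hl]. exists l. exact Hl.
Qed.

Lemma ex_series_p54 : forall q, 0 < q ->
  ex_series (fun m => Rpower (INR (2*m) + q) (-5/4)).
Proof.
  intros q Hq.
  set (T := fun x => Rpower x (-1/4)).
  assert (Hstep : forall m, Rpower (INR (2 * S m) + q) (-5/4) <=
            2 * (T (INR (2*m) + q) - T (INR (2 * S m) + q))).
  { intros m.
    assert (E : INR (2 * S m) = INR (2*m) + 2) by (rewrite !INR_2m, S_INR; ring).
    rewrite E.
    assert (H0 : 0 <= INR (2*m)) by apply pos_INR.
    destruct (MVT_cor2 T (fun x => -1/4 * Rpower x (-1/4 - 1)) (INR (2*m) + q) (INR (2*m) + 2 + q))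
      as [c [Hc1 Hc2]].
    - lra.
    - intros c Hc. apply derivable_pt_lim_power. lra.
    - replace (INR (2 * m) + 2 + q) with (INR (2 * m) + q + 2) in * by ring.
      replace (-1/4 - 1) with (-5/4) in Hc1 by field.
      assert (Rpower (INR (2 * m) + q + 2) (-5/4) <= Rpower c (-5/4))
        by (apply Rpower_decr; lra).
      lra. }
  apply ex_series_pos_bounded with (Rpower (INR (2*0) + q) (-5/4) + 2 * T (INR (2*0) + q)).
  - intros; apply Rlt_le, Rpower_pos'.
  - assert (Hgen : forall n, sum_f_R0 (fun m => Rpower (INR (2*m) + q) (-5/4)) n <=
        Rpower (INR (2*0) + q) (-5/4) + 2 * T (INR (2*0) + q) - 2 * T (INR (2*n) + q)).
    { induction n as [|n IH].
      - simpl. lra.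
      - rewrite tech5. specialize (Hstep n). lra. }
    intros n. specialize (Hgen n). assert (0 < T (INR (2*n) + q)) by apply Rpower_pos'. lra.
Qed.


Definition phi (k : nat) (x y : R) : R := (- ln x) ^ k * Rpower x (- y).
Definition dphi (k : nat) (x y : R) : R :=
  (INR k * (- ln x) ^ (pred k) * (-1) + (- ln x) ^ k * (- y)) * Rpower x (- y) / x.

Lemma phi_dx : forall k x y, 0 < x -> is_derive (fun x => phi k x y) x (dphi k x y).
Proof.
  intros k x y Hx. unfold phi, dphi, Rpower.
  auto_derive.
  - auto.
  - field. lra.
Qed.

Lemma phi_dy : forall k x y, is_derive (fun y => phi k x y) y (phi (S k) x y).
Proof.
  intros k x y. unfold phi, Rpower. auto_derive; [auto|]. simpl. ring.
Qed.

Lemma dphi_bound : forall k, exists K, 0 < K /\ forall x y, 1 <= x -> 1/2 <= y <= 3/2 ->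
  Rabs (dphi k x y) <= K * Rpower x (-5/4).
Proof.
  intros k.
  destruct (pow_le_exp (pred k) (1/4)) as [C1 [HC1 B1]]; [lra|].
  destruct (pow_le_exp k (1/4)) as [C2 [HC2 B2]]; [lra|].
  assert (Hk : 0 <= INR k) by apply pos_INR.
  exists (INR k * C1 + 3/2 * C2 + 1). split; [nra|].
  intros x y Hx Hy.
  set (L := ln x).
  assert (HL : 0 <= L) by (unfold L; rewrite <- ln_1; apply ln_le'; lra).
  unfold dphi. fold L.
  assert (E1 : Rpower x (-y) / x = exp (-y * L) * exp (- L)).
  { unfold Rpower. fold L. unfold Rdiv. f_equal. rewrite exp_Ropp. unfold L. rewrite exp_ln; lra. }
  assert (E2 : Rpower x (-5/4) = exp (-5/4 * L)) by (unfold Rpower; fold L; auto).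
  rewrite E2.
  match goal with |- Rabs (?A * ?P / ?X) <= _ => replace (A * P / X) with (A * (P / X)) by (unfold Rdiv; ring) end.
  rewrite E1.
  rewrite Rabs_mult.
  assert (Hp : forall j, Rabs ((-L)^j) = L^j).
  { intros j. rewrite <- RPow_abs. f_equal. rewrite Rabs_Ropp. apply Rabs_pos_eq; auto. }
  assert (HA : Rabs (INR k * (- L) ^ pred k * -1 + (- L) ^ k * - y) <=
               (INR k * C1 + 3/2 * C2) * exp (1/4 * L)).
  { eapply Rle_trans; [apply Rabs_triang|].
    rewrite !Rabs_mult, !Hp, !Rabs_Ropp, ?Rabs_R1, (Rabs_pos_eq (INR k)) by auto.
    rewrite (Rabs_pos_eq y) by lra.
    specialize (B1 L HL). specialize (B2 L HL).
    assert (0 <= L ^ k) by (apply pow_le; auto).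
    assert (0 <= L ^ pred k) by (apply pow_le; auto).
    assert (0 < exp (1/4*L)) by apply exp_pos.
    replace (Rabs (-1)) with 1 by (rewrite Rabs_left; lra).
    assert (INR k * L ^ pred k <= INR k * (C1 * exp (1/4*L))) by (apply Rmult_le_compat_l; auto).
    assert (L ^ k * y <= (C2 * exp (1/4*L)) * (3/2)) by (apply Rmult_le_compat; lra).
    nra. }
  rewrite (Rabs_pos_eq (exp (-y*L) * exp (-L))) by (apply Rlt_le, Rmult_lt_0_compat; apply exp_pos).
  assert (exp (-y*L) <= exp (-1/2*L)) by (apply exp_le; nra).
  assert (0 < exp (-y*L)) by apply exp_pos.
  assert (0 < exp (-L)) by apply exp_pos.
  assert (0 <= Rabs (INR k * (- L) ^ pred k * -1 + (- L) ^ k * - y)) by apply Rabs_pos.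
  apply Rle_trans with ((INR k * C1 + 3 / 2 * C2) * exp (1 / 4 * L) * (exp (-1/2 * L) * exp (- L))).
  - assert (exp (-y*L) * exp (-L) <= exp (-1/2*L) * exp (-L)) by (apply Rmult_le_compat_r; lra).
    apply Rmult_le_compat; try nra.
  - assert (EE : exp (1 / 4 * L) * (exp (-1/2 * L) * exp (- L)) = exp (-5/4*L)).
    { rewrite <- (exp_plus (-1/2*L) (-L)), <- exp_plus. f_equal. lra. }
    rewrite Rmult_assoc, EE. assert (0 < exp (-5/4*L)) by apply exp_pos. lra.
Qed.

Lemma pair_bound : forall k, exists K, 0 < K /\ forall x y, 1 <= x -> 1/2 <= y <= 3/2 ->
  Rabs (phi k x y - phi k (x+1) y) <= K * Rpower x (-5/4).
Proof.
  intros k. destruct (dphi_bound k) as [K [HK B]]. exists K; split; auto.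
  intros x y Hx Hy.
  destruct (MVT_cor2 (fun x => phi k x y) (fun x => dphi k x y) x (x+1)) as [c [Hc1 Hc2]].
  - lra.
  - intros c Hc. apply is_derive_Reals. apply phi_dx. lra.
  - rewrite <- Rabs_Ropp. replace (- (phi k x y - phi k (x + 1) y)) with (dphi k c y * (x + 1 - x)) by lra.
    replace (x+1-x) with 1 by ring. rewrite Rmult_1_r.
    eapply Rle_trans; [apply B; lra|].
    apply Rmult_le_compat_l; [lra|]. apply Rpower_decr; lra.
Qed.


Lemma ex_series_tail_bound : forall (v : nat -> R) (M : nat -> R) m0,
  (forall m, (m0 <= m)%nat -> Rabs (v m) <= M m) -> ex_series M -> ex_series v.
Proof.
  intros v M m0 Hb HM.
  apply (ex_series_incr_n v m0).
  apply (@ex_series_le R_AbsRing R_CompleteNormedModule _ (fun k => M (m0 + k)%nat)).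
  - intros k. apply Hb. lia.
  - apply (ex_series_incr_n M m0). exact HM.
Qed.

Lemma series_sum_Un_cv : forall v, ex_series v -> Un_cv (fun n => sum_f_R0 v n) (Series v).
Proof.
  intros v Hv. pose proof (Series_correct v Hv) as H. apply is_series_Reals in H. exact H.
Qed.

Lemma tail_le : forall (v M : nat -> R) n,
  (forall k, Rabs (v (S n + k)%nat) <= M (S n + k)%nat) -> ex_series M ->
  ex_series v ->
  Rabs (Series v - sum_f_R0 v n) <= Series M - sum_f_R0 M n.
Proof.
  intros v M n Hb HM Hv.
  rewrite (Series_incr_n v (S n)) by (lia || auto).
  rewrite (Series_incr_n M (S n)) by (lia || auto). simpl pred.
  replace (sum_f_R0 v n + Series (fun k => v (S n + k)%nat) - sum_f_R0 v n)
    with (Series (fun k => v (S n + k)%nat)) by ring.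
  replace (sum_f_R0 M n + Series (fun k => M (S n + k)%nat) - sum_f_R0 M n)
    with (Series (fun k => M (S n + k)%nat)) by ring.
  assert (HMt : ex_series (fun k => M (S n + k)%nat)) by (apply (ex_series_incr_n M (S n)); auto).
  assert (Hat : ex_series (fun k => Rabs (v (S n + k)%nat))).
  { apply (@ex_series_le R_AbsRing R_CompleteNormedModule _ (fun k => M (S n + k)%nat)); auto.
    intros k. change (norm (Rabs (v (S n + k)%nat))) with (Rabs (Rabs (v (S n + k)%nat))).
    rewrite Rabs_Rabsolu. apply Hb. }
  eapply Rle_trans; [apply Series_Rabs; auto|].
  apply Series_le; auto. intros k; split; [apply Rabs_pos|apply Hb].
Qed.

Lemma series_deriv (u u' : nat -> R -> R) (a b : R) (M : nat -> R) (m0 : nat) :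
  (forall m y, a < y < b -> is_derive (u m) y (u' m y)) ->
  (forall m y, a < y < b -> ex_derive (u' m) y) ->
  (forall m y, (m0 <= m)%nat -> a < y < b -> Rabs (u' m y) <= M m) ->
  ex_series M ->
  (forall y, a < y < b -> ex_series (fun m => u m y)) ->
  forall x, a < x < b ->
    is_derive (fun y => Series (fun m => u m y)) x (Series (fun m => u' m x)).
Proof.
  intros Hd Hd' Hb HM Hu x Hx.
  apply is_derive_Reals.
  assert (Hr : 0 < Rmin (x - a) (b - x)) by (apply Rmin_glb_lt; lra).
  set (r := mkposreal _ Hr).
  assert (Hin : forall y, Boule x r y -> a < y < b).
  { intros y Hy. unfold Boule in Hy. simpl in Hy.
    apply Rabs_lt_between' in Hy.
    pose proof (Rmin_l (x-a) (b-x)). pose proof (Rmin_r (x-a) (b-x)). lra. }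
  assert (Hu' : forall y, a < y < b -> ex_series (fun m => u' m y)).
  { intros y Hy. apply ex_series_tail_bound with M m0; auto. }
  assert (HCVU : CVU (fun n y => sum_f_R0 (fun m => u' m y) n) (fun y => Series (fun m => u' m y)) x r).
  { intros eps Heps.
    destruct (series_sum_Un_cv M HM eps Heps) as [N HN].
    exists (N + m0)%nat. intros n y Hn Hy.
    eapply Rle_lt_trans.
    - apply tail_le; [|exact HM|auto]. intros k. apply Hb; [lia|]. auto.
    - specialize (HN n ltac:(lia)). unfold Rdist in HN.
      rewrite Rabs_minus_sym in HN.
      pose proof (Rle_abs (Series M - sum_f_R0 M n)). lra. }
  apply (derivable_pt_lim_CVU (fun n y => sum_f_R0 (fun m => u m y) n)
           (fun n y => sum_f_R0 (fun m => u' m y) n)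
           (fun y => Series (fun m => u m y)) (fun y => Series (fun m => u' m y)) x x r).
  - unfold Boule. replace (x - x) with 0 by ring. rewrite Rabs_R0. apply cond_pos.
  - intros y n Hy. induction n as [|n IH].
    + simpl. apply is_derive_Reals. apply Hd. auto.
    + simpl. apply (derivable_pt_lim_plus (fun y => sum_f_R0 (fun m => u m y) n) (u (S n))).
      * exact IH.
      * apply is_derive_Reals. apply Hd. auto.
  - intros y Hy. apply series_sum_Un_cv. auto.
  - exact HCVU.
  - intros y0 Hy0. apply (CVU_continuity _ _ x r HCVU); [|exact Hy0].
    intros n y Hy. induction n as [|n IH].
    + simpl. apply continuity_pt_filterlim. apply (@ex_derive_continuous R_AbsRing R_NormedModule). apply Hd'. auto.
    + simpl. apply (continuity_pt_plus (fun y => sum_f_R0 (fun m => u' m y) n) (u' (S n))).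
      * exact IH.
      * apply continuity_pt_filterlim. apply (@ex_derive_continuous R_AbsRing R_NormedModule). apply Hd'. auto.
Qed.


Lemma INR_unb : forall x, exists N : nat, x < INR N.
Proof.
  intros x. destruct (archimed x) as [H1 H2].
  exists (Z.to_nat (up x)).
  destruct (Z_le_gt_dec 0 (up x)) as [Hz|Hz].
  - rewrite INR_IZR_INZ, Z2Nat.id by lia. lra.
  - pose proof (pos_INR (Z.to_nat (up x))).
    assert (IZR (up x) < 0) by (apply IZR_lt; lia). lra.
Qed.

Lemma rpow_small : forall eps, 0 < eps -> exists X, 0 < X /\
  forall x, X <= x -> Rpower x (-1/2) < eps.
Proof.
  intros eps He. exists (exp (-2 * ln eps + 1)). split; [apply exp_pos|].
  intros x Hx.
  assert (Hx0 : 0 < x) by (pose proof (exp_pos (-2 * ln eps + 1)); lra).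
  assert (ln (exp (-2 * ln eps + 1)) <= ln x) by (apply ln_le'; [apply exp_pos|auto]).
  rewrite ln_exp in H.
  unfold Rpower. rewrite <- (exp_ln eps) by auto. apply exp_increasing. lra.
Qed.

Lemma g_small : forall l eps, 0 < eps -> exists X, 1 <= X /\
  forall x, X <= x -> Rabs (ln x ^ l / x) < eps.
Proof.
  intros l eps He.
  destruct (pow_le_exp l (1/2)) as [C [HC HB]]; [lra|].
  destruct (rpow_small (eps / C)) as [X [HX HXb]]; [apply Rdiv_lt_0_compat; lra|].
  exists (Rmax X 1). split; [apply Rmax_r|].
  intros x Hx. pose proof (Rmax_l X 1). pose proof (Rmax_r X 1).
  set (L := ln x).
  assert (HL : 0 <= L) by (unfold L; rewrite <- ln_1; apply ln_le'; lra).
  assert (Ex : x = exp L) by (unfold L; rewrite exp_ln; lra).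
  assert (Hp : 0 <= L ^ l) by (apply pow_le; auto).
  rewrite Rabs_pos_eq by (apply Rdiv_le_0_compat; lra).
  specialize (HB L HL). specialize (HXb x ltac:(lra)).
  unfold Rpower in HXb. fold L in HXb.
  assert (E2 : exp (1/2 * L) / x = exp (-1/2 * L)).
  { rewrite Ex. unfold Rdiv. rewrite <- exp_Ropp, <- exp_plus. f_equal. lra. }
  apply Rle_lt_trans with (C * exp (1/2 * L) / x).
  - unfold Rdiv. apply Rmult_le_compat_r; [|auto]. left; apply Rinv_0_lt_compat; lra.
  - unfold Rdiv in *. rewrite Rmult_assoc. fold (Rdiv (exp (1/2 * L)) x). rewrite E2.
    apply (Rmult_lt_reg_l (/ C)); [apply Rinv_0_lt_compat; lra|].
    rewrite <- Rmult_assoc, Rinv_l, Rmult_1_l by lra.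
    rewrite (Rmult_comm (/ C) eps). exact HXb.
Qed.

Lemma is_series_pairs : forall (a : nat -> R) L,
  is_series (fun m => a (2*m)%nat + a (2*m+1)%nat) L -> is_lim_seq a 0 -> is_series a L.
Proof.
  intros a L HS Ha.
  apply is_series_Reals in HS. apply is_lim_seq_Reals in Ha.
  apply is_series_Reals.
  assert (Hodd : forall m, sum_f_R0 a (2*m+1) = sum_f_R0 (fun m => a (2*m)%nat + a (2*m+1)%nat) m).
  { induction m as [|m IH].
    - simpl. ring.
    - replace (2 * S m + 1)%nat with (S (S (2*m+1))) by lia.
      rewrite !tech5, IH. simpl sum_f_R0.
      replace (S (2*m+1)) with (2 * S m)%nat by lia.
      replace (S (2 * S m)) with (2 * S m + 1)%nat by lia. ring. }
  intros eps He.
  destruct (HS (eps/2)) as [N1 HN1]; [lra|].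
  destruct (Ha (eps/2)) as [N2 HN2]; [lra|].
  exists (2*N1 + 2*N2 + 2)%nat. intros n Hn.
  destruct (Nat.Even_or_Odd n) as [[m Hm]|[m Hm]].
  -
    subst n.
    assert (E : sum_f_R0 a (2*m) = sum_f_R0 a (2*m+1) - a (2*m+1)%nat).
    { replace (2*m+1)%nat with (S (2*m)) by lia. rewrite tech5. ring. }
    rewrite E, Hodd.
    specialize (HN1 m ltac:(lia)). specialize (HN2 (2*m+1)%nat ltac:(lia)).
    unfold Rdist in *. rewrite Rminus_0_r in HN2.
    replace (sum_f_R0 (fun m0 : nat => a (2 * m0)%nat + a (2 * m0 + 1)%nat) m - a (2 * m + 1)%nat - L)
      with ((sum_f_R0 (fun m0 : nat => a (2 * m0)%nat + a (2 * m0 + 1)%nat) m - L) - a (2 * m + 1)%nat) by ring.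
    eapply Rle_lt_trans; [apply Rabs_triang|]. rewrite Rabs_Ropp. lra.
  - subst n. rewrite Hodd. apply Rlt_trans with (eps/2); [|lra]. apply HN1. lia.
Qed.


Definition pairk (q : R) (k m : nat) (y : R) : R :=
  phi k (INR (2*m) + q) y - phi k (INR (2*m) + q + 1) y.
Definition Hk (q : R) (k : nat) (y : R) : R := Series (fun m => pairk q k m y).

Lemma pairk_bound : forall q k, 0 < q -> exists M : nat -> R, ex_series M /\
  forall m y, (1 <= m)%nat -> 1/2 <= y <= 3/2 -> Rabs (pairk q k m y) <= M m.
Proof.
  intros q k Hq. destruct (pair_bound k) as [K [HK HB]].
  exists (fun m => K * Rpower (INR (2*m) + q) (-5/4)). split.
  - apply (ex_series_scal_l K (fun m => Rpower (INR (2*m) + q) (-5/4))). apply ex_series_p54; auto.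
  - intros m y Hm Hy. unfold pairk. apply HB; auto.
    rewrite INR_2m. apply le_INR in Hm. simpl in Hm. lra.
Qed.

Lemma pairk_ex : forall q k y, 0 < q -> 1/2 <= y <= 3/2 -> ex_series (fun m => pairk q k m y).
Proof.
  intros q k y Hq Hy. destruct (pairk_bound q k Hq) as [M [HM HB]].
  apply ex_series_tail_bound with M 1%nat; auto.
Qed.

Lemma pairk_deriv : forall q k m y, is_derive (pairk q k m) y (pairk q (S k) m y).
Proof.
  intros. unfold pairk, phi, Rpower. auto_derive; [auto|]. simpl. ring.
Qed.

Lemma Hk_deriv : forall q k y, 0 < q -> 1/2 < y < 3/2 -> is_derive (Hk q k) y (Hk q (S k) y).
Proof.
  intros q k y Hq Hy. unfold Hk.
  destruct (pairk_bound q (S k) Hq) as [M [HM HB]].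
  apply (series_deriv (pairk q k) (pairk q (S k)) (1/2) (3/2) M 1%nat); auto.
  - intros m y0 _. apply pairk_deriv.
  - intros m y0 _. eexists. apply pairk_deriv.
  - intros m y0 Hm Hy0. apply HB; auto; lra.
  - intros y0 Hy0. apply pairk_ex; auto; lra.
Qed.

Lemma zeta_H0 : forall q y, 0 < q -> 1/2 < y < 3/2 -> zetaE_real q y = Hk q 0 y.
Proof.
  intros q y Hq Hy. unfold zetaE_real.
  apply is_series_unique. apply is_series_pairs.
  - unfold Hk. apply (is_series_ext (fun m => pairk q 0 m y)).
    + intros m. unfold pairk, phi. rewrite !pow_O.
      rewrite pow_1_even. replace (2*m+1)%nat with (S (2*m)) by lia. rewrite pow_1_odd.
      rewrite S_INR. replace (INR (2*m) + 1 + q) with (INR (2*m) + q + 1) by ring. match goal with |- ?a = ?b => change (@eq R a b) end; ring.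
    + apply Series_correct. apply pairk_ex; auto; lra.
  - apply is_lim_seq_spec. intros eps.
    destruct (rpow_small eps (cond_pos eps)) as [X [HX HXb]].
    destruct (INR_unb (X + 1)) as [N HN].
    exists N. intros n Hn. rewrite Rminus_0_r, Rabs_mult, pow_1_abs, Rmult_1_l.
    apply le_INR in Hn.
    assert (Hx : X + 1 <= INR n + q) by lra.
    rewrite Rabs_pos_eq by (apply Rlt_le, Rpower_pos').
    apply Rle_lt_trans with (Rpower (INR n + q) (-1/2)); [|apply HXb; lra].
    unfold Rpower. apply exp_le.
    assert (0 <= ln (INR n + q)) by (rewrite <- ln_1; apply ln_le'; lra). nra.
Qed.

Lemma locally_interval : forall y, 1/2 < y < 3/2 -> locally y (fun t => 1/2 < t < 3/2).
Proof.
  intros y Hy.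
  assert (Hr : 0 < Rmin (y - 1/2) (3/2 - y)) by (apply Rmin_glb_lt; lra).
  exists (mkposreal _ Hr). intros t Ht. simpl in Ht.
  change (Rabs (t - y) < Rmin (y - 1/2) (3/2 - y)) in Ht.
  apply Rabs_lt_between' in Ht.
  pose proof (Rmin_l (y - 1/2) (3/2 - y)). pose proof (Rmin_r (y - 1/2) (3/2 - y)). lra.
Qed.

Lemma Derive_n_zeta : forall q k y, 0 < q -> 1/2 < y < 3/2 ->
  Derive_n (zetaE_real q) k y = Hk q k y.
Proof.
  intros q k. induction k as [|k IH]; intros y Hq Hy.
  - simpl. apply zeta_H0; auto.
  - simpl. rewrite (Derive_ext_loc _ (Hk q k)).
    + apply is_derive_unique. apply Hk_deriv; auto.
    + apply (filter_imp (fun t => 1/2 < t < 3/2)); [|apply locally_interval; auto].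
      intros t Ht. apply IH; auto.
Qed.

Lemma gamma_series : forall q l, 0 < q ->
  is_series (fun n => (-1) ^ n * (ln (INR n + q) ^ l / (INR n + q))) (gamma_tilde l q).
Proof.
  intros q l Hq. unfold gamma_tilde.
  rewrite Derive_n_zeta by (auto; lra).
  apply is_series_pairs.
  - unfold Hk.
    apply (is_series_ext (fun m => scal ((-1)^l) (pairk q l m 1))).
    + intros m. change (scal ((-1)^l) (pairk q l m 1)) with ((-1)^l * pairk q l m 1).
      match goal with |- ?a = ?b => change (@eq R a b) end.
      unfold pairk, phi.
      rewrite pow_1_even. replace (2*m+1)%nat with (S (2*m)) by lia. rewrite pow_1_odd.
      rewrite S_INR. replace (INR (2*m) + 1 + q) with (INR (2*m) + q + 1) by ring.
      assert (H0 : 0 <= INR (2*m)) by apply pos_INR.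
      rewrite !Rpower_Ropp, !Rpower_1 by lra.
      assert (Hz : forall z, (-1)^l * (-z)^l = z^l).
      { intros z. rewrite <- Rpow_mult_distr. f_equal. ring. }
      set (a := ln (INR (2 * m) + q)). set (b := ln (INR (2 * m) + q + 1)).
      transitivity (((-1)^l * (-a)^l) * / (INR (2 * m) + q) - ((-1)^l * (-b)^l) * / (INR (2 * m) + q + 1)).
      { ring. }
      rewrite !Hz. unfold Rdiv. ring.
    + apply (@is_series_scal R_AbsRing R_NormedModule ((-1)^l)). apply Series_correct. apply pairk_ex; auto; lra.
  - apply is_lim_seq_spec. intros eps.
    destruct (g_small l eps (cond_pos eps)) as [X [HX HXb]].
    destruct (INR_unb X) as [N HN].
    exists N. intros n Hn. rewrite Rminus_0_r, Rabs_mult, pow_1_abs, Rmult_1_l.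
    apply le_INR in Hn. apply HXb. lra.
Qed.


Lemma pow_m1_sq : forall n, (-1)^n * (-1)^n = 1.
Proof. intros n. rewrite <- pow_add. replace (n+n)%nat with (2*n)%nat by lia. apply pow_1_even. Qed.

Lemma part2 : forall (q l : nat), (1 <= q)%nat ->
     exists S : R,
       is_series (fun k => (-1) ^ (k + q + 1) *
                    (ln (INR (k + q) + 1) ^ l / (INR (k + q) + 1)
                     - ln (INR (k + q)) ^ l / INR (k + q))) S /\
       gamma_tilde l (INR q) =
         ln (INR q) ^ l / (2 * INR q) + (-1) ^ q / 2 * S.
Proof.
  intros q l Hq.
  assert (HQ : 0 < INR q) by (apply lt_0_INR; lia).
  set (Q := INR q) in *.
  set (b := fun n => (-1) ^ n * (ln (INR n + Q) ^ l / (INR n + Q))).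
  set (Z := gamma_tilde l Q).
  assert (Hb : is_series b Z) by (apply gamma_series; auto).
  assert (Hb1 : is_series (fun k => b (S k)) (Z - b O)).
  { apply is_series_incr_1. change (is_series b (Z - b O + b O)).
    assert (E : Z - b O + b O = Z) by ring. rewrite E. auto. }
  assert (H2 : is_series (fun k => (-1)^q * (b (S k) + b k)) ((-1)^q * ((Z - b O) + Z))).
  { apply (@is_series_scal R_AbsRing R_NormedModule ((-1)^q)).
    apply (@is_series_plus R_AbsRing R_NormedModule); auto. }
  exists ((-1)^q * ((Z - b O) + Z)). split.
  - apply (is_series_ext _ _ _ ) with (2 := H2).
    intros k. match goal with |- ?a = ?c => change (@eq R a c) end.
    unfold b. rewrite plus_INR, S_INR. fold Q.
    replace (INR k + Q + 1) with (INR k + 1 + Q) by ring.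
    rewrite !pow_add. simpl pow. ring.
  - assert (E : b O = ln Q ^ l / Q).
    { unfold b. simpl pow. simpl INR. rewrite Rplus_0_l. ring. }
    rewrite E.
    replace ((-1) ^ q / 2 * ((-1) ^ q * (Z - ln Q ^ l / Q + Z)))
      with (((-1)^q * (-1)^q) * ((Z - ln Q ^ l / Q + Z) / 2)) by (unfold Rdiv; ring).
    rewrite pow_m1_sq. field. lra.
Qed.

Definition bq (l : nat) (q : R) (n : nat) : R := (-1) ^ n * (ln (INR n + q) ^ l / (INR n + q)).

Lemma tail_series : forall q l, 0 < q -> forall alpha, exists T,
  is_series (fun k => bq l q (alpha + k)%nat) T /\
  T + sum_f_R0 (bq l q) alpha - bq l q alpha = gamma_tilde l q.
Proof.
  intros q l Hq alpha. induction alpha as [|a [T [HT HE]]].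
  - exists (gamma_tilde l q). split.
    + apply gamma_series; auto.
    + simpl. ring.
  - exists (T - bq l q a). split.
    + apply (is_series_ext (fun k => bq l q (a + S k)%nat)).
      * intros k. f_equal. lia.
      * apply (is_series_incr_1 (fun k => bq l q (a + k)%nat)).
        change (is_series (fun k => bq l q (a + k)%nat) (T - bq l q a + bq l q (a + 0)%nat)).
        rewrite Nat.add_0_r. assert (E : T - bq l q a + bq l q a = T) by ring. rewrite E. auto.
    + rewrite tech5. lra.
Qed.

Lemma part1_series : forall q l alpha, 0 < q -> exists I,
  is_series (fun k => bq l q (S (alpha + k)) + bq l q (alpha + k)%nat) I /\
  gamma_tilde l q =
         sum_f_R0 (fun n => (-1) ^ n * (ln (INR n + q) ^ l / (INR n + q))) alpha
         - (-1) ^ alpha * (ln (INR alpha + q) ^ l / (2 * (INR alpha + q)))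
         + / 2 * I.
Proof.
  intros q l alpha Hq.
  destruct (tail_series q l Hq alpha) as [T [HT HE]].
  assert (HT1 : is_series (fun k => bq l q (S (alpha + k))) (T - bq l q alpha)).
  { apply (is_series_ext (fun k => bq l q (alpha + S k)%nat)).
    - intros k. f_equal. lia.
    - apply (is_series_incr_1 (fun k => bq l q (alpha + k)%nat)).
      change (is_series (fun k => bq l q (alpha + k)%nat) (T - bq l q alpha + bq l q (alpha + 0)%nat)).
      rewrite Nat.add_0_r. assert (E : T - bq l q alpha + bq l q alpha = T) by ring. rewrite E. auto. }
  exists ((T - bq l q alpha) + T). split.
  - apply (@is_series_plus R_AbsRing R_NormedModule); auto.
  - rewrite <- HE. fold (bq l q).
    assert (Hx : 0 < INR alpha + q) by (pose proof (pos_INR alpha); lra).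
    unfold bq. field. lra.
Qed.


Definition fI (l : nat) (q t : R) : R := E0bar (- t) * Derive (g l q) t.
Definition dg (l : nat) (q t : R) : R :=
  (INR l * ln (t + q) ^ (pred l) - ln (t + q) ^ l) / (t + q) ^ 2.

Lemma g_deriv : forall l q t, 0 < t + q -> is_derive (g l q) t (dg l q t).
Proof.
  intros l q t H. unfold g, dg. auto_derive.
  - repeat split; lra.
  - field. lra.
Qed.

Lemma E0bar_on : forall (n : nat) t, INR n < t < INR n + 1 -> E0bar (- t) = (-1) ^ (S n).
Proof.
  intros n t Ht. unfold E0bar.
  rewrite <- (tech_up (- t) (- Z.of_nat n)).
  - replace (- Z.of_nat n - 1)%Z with (- Z.of_nat (S n))%Z by lia.
    rewrite powerRZ_neg', <- pow_powerRZ.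
    assert (Hnz : (-1) ^ S n <> 0) by (apply pow_nonzero; lra).
    rewrite <- (Rmult_1_l (/ _)). rewrite <- (pow_m1_sq (S n)). field. auto.
  - rewrite opp_IZR, <- INR_IZR_INZ. lra.
  - rewrite opp_IZR, <- INR_IZR_INZ. lra.
Qed.

Lemma is_RInt_val : forall (f : R -> R) a b (v w : R), is_RInt f a b v -> v = w -> is_RInt f a b w.
Proof. intros; subst; auto. Qed.

Lemma piece : forall l q (n : nat) a b, 0 < q -> INR n <= a <= b -> b <= INR n + 1 ->
  is_RInt (fI l q) a b ((-1) ^ (S n) * (g l q b - g l q a)).
Proof.
  intros l q n a b Hq Ha Hb.
  pose proof (pos_INR n).
  set (c := (-1) ^ (S n)).
  assert (HD := is_RInt_derive (fun t => c * g l q t) (fun t => c * dg l q t) a b).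
  rewrite Rmin_left in HD by lra. rewrite Rmax_right in HD by lra.
  eapply is_RInt_val.
  - apply (is_RInt_ext (fun t => c * dg l q t)).
    + rewrite Rmin_left by lra. rewrite Rmax_right by lra.
      intros x Hx. unfold fI. rewrite (E0bar_on n) by lra. fold c. f_equal.
      symmetry. apply is_derive_unique. apply g_deriv. lra.
    + apply HD.
      * intros x Hx. unfold g, dg. auto_derive.
        -- repeat split; lra.
        -- field. lra.
      * intros x Hx. apply (@ex_derive_continuous R_AbsRing R_NormedModule).
        unfold dg. auto_derive. repeat split; try lra. apply Rgt_not_eq. nra.
  - change (c * g l q b - c * g l q a = c * (g l q b - g l q a)). ring.
Qed.

Lemma bq_piece : forall l q n, (-1) ^ (S n) * (g l q (INR n + 1) - g l q (INR n)) = bq l q (S n) + bq l q n.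
Proof.
  intros. unfold bq, g. rewrite S_INR. simpl pow. ring.
Qed.

Lemma int_chasles : forall l q alpha, 0 < q -> forall j,
  is_RInt (fI l q) (INR alpha) (INR (alpha + S j))
    (sum_f_R0 (fun i => bq l q (S (alpha + i)) + bq l q (alpha + i)%nat) j).
Proof.
  intros l q alpha Hq j. induction j as [|j IH].
  - simpl. replace (alpha + 1)%nat with (S (alpha + 0)) by lia. rewrite S_INR.
    rewrite <- bq_piece. rewrite Nat.add_0_r. apply piece; auto; lra.
  - rewrite tech5. eapply is_RInt_val.
    + apply (is_RInt_Chasles (fI l q) _ (INR (alpha + S j)) _ _
         ((-1)^(S (alpha + S j)) * (g l q (INR (alpha + S j) + 1) - g l q (INR (alpha + S j)))) IH).
      replace (alpha + S (S j))%nat with (S (alpha + S j)) by lia. rewrite (S_INR (alpha + S j)).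
      apply (piece l q (alpha + S j)); auto; lra.
    + rewrite bq_piece. replace (alpha + S j)%nat with (S (alpha + j)) by lia. reflexivity.
Qed.

Lemma floor_nat : forall x, 0 <= x -> exists n : nat, INR n <= x < INR n + 1.
Proof.
  intros x Hx. destruct (INR_unb x) as [N HN].
  revert x Hx HN. induction N as [|N IH]; intros x Hx HN.
  - simpl in HN. lra.
  - destruct (Rlt_le_dec x (INR N)) as [H|H].
    + apply IH; auto.
    + exists N. rewrite S_INR in HN. lra.
Qed.

Lemma int_gen : forall l q alpha I, 0 < q ->
  is_series (fun k => bq l q (S (alpha + k)) + bq l q (alpha + k)%nat) I ->
  is_RInt_gen (fun t => E0bar (- t) * Derive (g l q) t) (at_point (INR alpha)) (Rbar_locally p_infty) I.
Proof.
  intros l q alpha I Hq HI.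
  apply is_series_Reals in HI.
  intros P [eps HP]. unfold filtermapi.
  destruct (HI (eps/2)) as [N1 HN1]; [pose proof (cond_pos eps); lra|].
  destruct (g_small l (eps/4)) as [X [HX HXb]]; [pose proof (cond_pos eps); lra|].
  apply Filter_prod with (Q := fun a => a = INR alpha) (R := fun b => INR alpha + INR N1 + X + 2 < b).
  - reflexivity.
  - exists (INR alpha + INR N1 + X + 2). auto.
  - intros a b Ha Hb. cbv beta in Ha, Hb. subst a. simpl fst; simpl snd.
    pose proof (pos_INR N1).
    destruct (floor_nat (b - INR alpha - 1)) as [n Hn]; [lra|].
    set (A := INR (alpha + S n)).
    assert (HA : A = INR alpha + INR n + 1) by (unfold A; rewrite plus_INR, S_INR; ring).
    set (S0 := sum_f_R0 (fun i => bq l q (S (alpha + i)) + bq l q (alpha + i)%nat) n).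
    exists (S0 + (-1)^(S (alpha + S n)) * (g l q b - g l q A)). split.
    + eapply is_RInt_val.
      * apply (is_RInt_Chasles (fI l q) (INR alpha) A b S0
           ((-1)^(S (alpha + S n)) * (g l q b - g l q A))).
        -- apply int_chasles; auto.
        -- apply piece; auto.
           ++ fold A. lra.
           ++ fold A. lra.
      * reflexivity.
    + apply HP. change (Rabs (S0 + (-1) ^ S (alpha + S n) * (g l q b - g l q A) - I) < eps).
      assert (HnN : (N1 <= n)%nat).
      { apply INR_le. lra. }
      specialize (HN1 n HnN). unfold Rdist in HN1. fold S0 in HN1.
      pose proof (pos_INR alpha). pose proof (pos_INR n).
      assert (Hgb : Rabs (g l q b) < eps/4) by (unfold g; apply HXb; lra).
      assert (HgA : Rabs (g l q A) < eps/4) by (unfold g; apply HXb; lra).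
      replace (S0 + (-1) ^ S (alpha + S n) * (g l q b - g l q A) - I)
        with ((S0 - I) + (-1) ^ S (alpha + S n) * (g l q b - g l q A)) by ring.
      eapply Rle_lt_trans; [apply Rabs_triang|].
      rewrite Rabs_mult, pow_1_abs, Rmult_1_l.
      pose proof (Rabs_triang (g l q b) (- g l q A)) as HT. rewrite Rabs_Ropp in HT.
      unfold Rminus in *. lra.
Qed.


Theorem theorem3p6 :
  (forall (q : R) (l alpha : nat), 0 < q ->
     exists I : R,
       is_RInt_gen (fun t => E0bar (- t) * Derive (g l q) t)
         (at_point (INR alpha)) (Rbar_locally p_infty) I /\
       gamma_tilde l q =
         sum_f_R0 (fun n => (-1) ^ n * (ln (INR n + q) ^ l / (INR n + q))) alpha
         - (-1) ^ alpha * (ln (INR alpha + q) ^ l / (2 * (INR alpha + q)))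
         + / 2 * I) /\
  (forall (q l : nat), (1 <= q)%nat ->
     exists S : R,
       is_series (fun k => (-1) ^ (k + q + 1) *
                    (ln (INR (k + q) + 1) ^ l / (INR (k + q) + 1)
                     - ln (INR (k + q)) ^ l / INR (k + q))) S /\
       gamma_tilde l (INR q) =
         ln (INR q) ^ l / (2 * INR q) + (-1) ^ q / 2 * S).
Proof.
  split.
  - intros q l alpha Hq.
    destruct (part1_series q l alpha Hq) as [I [HI HE]].
    exists I. split; [apply int_gen; auto | exact HE].
  - exact part2.
Qed.
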